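(* Let $q\ge 2$ and let $n,k$ be positive integers with $5\le k\le n$. Then $$q^n\Big(\frac{q-1}{q}\Big)^{c_2\frac{n}{q^{k-1}}}\,e^{-\frac{c_2}{c_1}\frac{n}{q^{1.5k-1}}}\;\le\; a_q(n,k)\;\le\; q^{\,n- c_3\frac{n-2k}{q^k}},$$ where $c_1=\frac{(q-1)q^{\lceil k/2\rceil-k/2}}{2q}$, $c_2=\frac{\lfloor n/q^{k-1}\rfloor+1}{n/q^{k-1}}$ and $c_3=\frac{(\log_q e)(q-1)^2}{2q^{2}}$.
   Context: $\Sigma_q=\{0,1,\dots,q-1\}$. A vector $\vec a=(a_1,\dots,a_n)\in\Sigma_q^n$ is a $k$-RLL vector if $n<k$ or every window $(a_i,\dots,a_{i+k-1})$, $i\in[1,n-k+1]$, contains a nonzero symbol (i.e. $\vec a$ has no run of $k$ consecutive zeros). $A_q(n,k)$ is the set of $k$-RLL vectors in $\Sigma_q^n$ and $a_q(n,k)=|A_q(n,k)|$. *)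

(* Defs.v *)
From mathcomp Require Import all_boot.
From Stdlib Require Import Reals.
Set Implicit Arguments. Unset Strict Implicit. Unset Printing Implicit Defensive.

Definition is_rll (q n k : nat) (a : {ffun 'I_n -> 'I_q}) : bool :=
  (n < k) ||
  [forall i : 'I_n, (i + k <= n) ==>
     [exists j : 'I_n, [&& i <= j, j < i + k & nat_of_ord (a j) != 0]]].

Definition A_q (q n k : nat) : {set {ffun 'I_n -> 'I_q}} :=
  [set a | is_rll k a].

Definition a_q (q n k : nat) : nat := #|A_q q n k|.

Local Open Scope R_scope.

(* rll_c1 = (q-1) q^(ceil(k/2) - k/2) / (2q);  ceil(k/2) = (k+1) %/ 2 *)
Definition rll_c1 (q k : nat) : R :=
  (INR q - 1) * Rpower (INR q) (INR ((k + 1) %/ 2)%N - INR k / 2) / (2 * INR q).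

Definition rll_c2 (q n k : nat) : R :=
  (INR (n %/ q ^ (k - 1))%N + 1) / (INR n / INR q ^ (k - 1)).

(* rll_c3 = (log_q e) (q-1)^2 / (2 q^2), with log_q e = 1 / ln q *)
Definition rll_c3 (q : nat) : R :=
  (1 / ln (INR q)) * (INR q - 1) ^ 2 / (2 * INR q ^ 2).

(* Main.v *)
Require Import Defs.
From mathcomp Require Import all_boot.
From mathcomp Require Import zify.

Fixpoint ok (k c : nat) (s : seq nat) : bool :=
  match s with
  | [::] => true
  | x :: s' => if x == 0 then (c.+1 < k) && ok k c.+1 s' else ok k 0 s'
  end.

Definition Wn (k : nat) (s : seq nat) : Prop :=
  forall i, i + k <= size s -> exists j, [/\ i <= j, j < i + k, j < size s & nth 0 s j != 0].

Lemma nth_nz c (x : nat) (s : seq nat) j : nth 0 (nseq c 0 ++ x :: s) j =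
  if j < c then 0 else if j == c then x else nth 0 s (j - c.+1).
Proof.
rewrite nth_cat size_nseq; case: ifP => h; first by rewrite nth_nseq h.
case: eqP => [->|ne]; first by rewrite subnn.
have: j - c = (j - c.+1).+1 by lia.
by move->.
Qed.

Lemma W_shift k c (x : nat) (s : seq nat) : c < k -> x != 0 ->
  Wn k (nseq c 0 ++ x :: s) <-> Wn k s.
Proof.
move=> ck xn; split=> W i hi.
- have /W [j [h1 h2 h3 h4]] : i + c.+1 + k <= size (nseq c 0 ++ x :: s).
    by rewrite size_cat size_nseq /=; lia.
  move: h4; rewrite nth_nz.
  have -> : j < c = false by lia.
  have -> : j == c = false by apply/negbTE; apply/eqP; lia.
  rewrite size_cat size_nseq /= in h3.
  move=> h4; exists (j - c.+1); split => //; lia.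
- move: hi; rewrite size_cat size_nseq /= => hi.
  case: (leqP i c) => ic.
    exists c; split; rewrite ?size_cat ?size_nseq /=; try lia.
    by rewrite nth_nz ltnn eqxx.
  have /W [j [h1 h2 h3 h4]] : i - c.+1 + k <= size s by lia.
  exists (j + c.+1); split; rewrite ?size_cat ?size_nseq /=; try lia.
  rewrite nth_nz.
  have -> : j + c.+1 < c = false by lia.
  have -> : j + c.+1 == c = false by apply/negbTE; apply/eqP; lia.
  by have -> : j + c.+1 - c.+1 = j by lia.
Qed.

Lemma nseq_rcons0 c s : nseq c 0 ++ 0 :: s = nseq c.+1 0 ++ s.
Proof. by elim: c => //= c ->. Qed.

Lemma ok_W k c (s : seq nat) : c < k -> ok k c s <-> Wn k (nseq c 0 ++ s).
Proof.
elim: s c => [|x s IH] c ck /=.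
  split=> // _ i; rewrite cats0 size_nseq; lia.
case: eqP => [->|/eqP xn].
  rewrite nseq_rcons0.
  case: (ltnP c.+1 k) => ck1 /=; first exact: IH.
  split=> // W.
  have /W [j [h1 h2 h3 h4]] : 0 + k <= size (nseq c.+1 0 ++ s).
    by rewrite size_cat size_nseq; lia.
  have jc : j < c.+1 by lia.
  move: h4; rewrite -cat_cons -[0 :: nseq c 0]/(nseq c.+1 0).
  by rewrite nth_cat size_nseq jc nth_nseq jc.
rewrite (@W_shift k c x s ck xn).
have k0 : 0 < k by lia.
by rewrite (IH 0 k0).
Qed.

Fixpoint words (q n : nat) : seq (seq nat) :=
  if n is n'.+1 then [seq x :: w | x <- iota 0 q, w <- words q n'] else [:: [::]].

Lemma mem_words q n s : (s \in words q n) = (size s == n) && all (fun x => x < q) s.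
Proof.
elim: n s => [|n IH] [|x s] //=.
  by apply/negbTE/allpairsP => -[[a b] /= [_ _]].
apply/allpairsP/idP.
  case=> [[a b] /= [ha hb [-> ->]]]; move: hb; rewrite IH => /andP[/eqP -> ->].
  by rewrite mem_iota in ha; rewrite eqxx andbT; lia.
rewrite eqSS => /and3P [/eqP sz xq al]; exists (x, s) => /=; split => //.
  by rewrite mem_iota; lia.
by rewrite IH sz eqxx.
Qed.

Lemma uniq_words q n : uniq (words q n).
Proof.
elim: n => //= n IH.
apply: allpairs_uniq => //; first exact: iota_uniq.
by move=> [a b] [c d] _ _ /= [-> ->].
Qed.

Fixpoint F (q k n c : nat) : nat :=
  if n is n'.+1 then (if c.+1 < k then F q k n' c.+1 else 0) + (q - 1) * F q k n' 0
  else 1.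

Lemma count_nz k c (s : seq nat) (W : seq (seq nat)) : all (fun x => x != 0) s ->
  count (ok k c) [seq x :: w | x <- s, w <- W] = size s * count (ok k 0) W.
Proof.
elim: s => //= x s IH /andP [xn al].
rewrite count_cat IH // count_map mulSn; congr (_ + _).
by apply: eq_count => w /=; rewrite (negbTE xn).
Qed.

Lemma count_words q k n c : 0 < q -> count (ok k c) (words q n) = F q k n c.
Proof.
case: q => // q _; elim: n c => [|n IH] c //=.
rewrite count_cat count_map count_nz; last first.
  by apply/allP => x; rewrite mem_iota; lia.
rewrite size_iota IH subn1 /=; congr (_ + _).
rewrite -(IH c.+1); case: ifP => h /=.
  by apply: eq_count => w /=; rewrite h.
by rewrite (eq_count (a2 := pred0)) ?count_pred0 // => w /=; rewrite h.
Qed.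

Definition sq q n (a : {ffun 'I_n -> 'I_q}) : seq nat := [seq nat_of_ord (a i) | i <- enum 'I_n].
Arguments sq {q n}.

Lemma size_sq q n a : size (@sq q n a) = n.
Proof. by rewrite size_map size_enum_ord. Qed.
Arguments size_sq {q n}.

Lemma nth_sq q n a (i : 'I_n) : nth 0 (@sq q n a) i = a i.
Proof. by rewrite (nth_map i) ?size_enum_ord // nth_ord_enum. Qed.
Arguments nth_sq {q n}.

Lemma rll_W q n k (a : {ffun 'I_n -> 'I_q}) : 0 < k -> is_rll k a <-> Wn k (sq a).
Proof.
move=> k0; rewrite /is_rll; split.
  move=> /orP [nk | /forallP H] i; rewrite size_sq => hi; first by lia.
  have hin : i < n by lia.
  move: (H (Ordinal hin)) => /implyP /(_ hi) /existsP [j /and3P [h1 h2 h3]].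
  by exists j; split => //; rewrite nth_sq.
move=> W; apply/orP; right; apply/forallP => i; apply/implyP => hi.
have [j [h1 h2 h3 h4]] : exists j, [/\ i <= j, j < i + k, j < size (sq a) & nth 0 (sq a) j != 0].
  by apply: W; rewrite size_sq.
rewrite size_sq in h3.
apply/existsP; exists (Ordinal h3); apply/and3P; split => //.
by rewrite -(nth_sq a).
Qed.

Lemma card_count (T : finType) (P : pred T) : #|[pred x | P x]| = count P (enum T).
Proof. rewrite cardE /enum_mem size_filter /=. rewrite /enum_mem count_filter. by apply: eq_count => x; rewrite /= andbT. Qed.

Lemma a_q_count q n k : 0 < k -> a_q q n k = count (ok k 0) (words q n).
Proof.
move=> k0.
have e : perm_eq [seq sq a | a <- enum {ffun 'I_n -> 'I_q}] (words q n).
  apply: uniq_perm.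
  - rewrite map_inj_uniq ?enum_uniq // => a b e.
    apply/ffunP => i; apply/val_inj => /=; by rewrite -!nth_sq e.
  - exact: uniq_words.
  move=> s; apply/mapP/idP.
    case=> a _ ->; rewrite mem_words size_sq eqxx /=.
    by apply/allP => x /mapP [i _ ->].
  rewrite mem_words => /andP [/eqP sz al].
  have H : forall i : 'I_n, nth 0 s i < q.
    by move=> i; apply: (all_nthP 0 al); rewrite sz.
  exists [ffun i => Ordinal (H i)]; first by rewrite mem_enum.
  apply: (@eq_from_nth _ 0); first by rewrite size_sq.
  move=> i; rewrite sz => hi.
  by rewrite (nth_sq _ (Ordinal hi)) ffunE.
rewrite -(permP e) count_map -card_count /a_q /A_q.
apply: eq_card => a; rewrite inE /=.
apply/idP/idP => h.
  by apply/(@ok_W k 0 (sq a) k0); apply/(@rll_W q n k a k0).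
by apply/(@rll_W q n k a k0); apply/(@ok_W k 0 (sq a) k0).
Qed.

Lemma F_small q k n c : 0 < q -> n + c < k -> F q k n c = q ^ n.
Proof.
move=> q0; elim: n c => [|n IH] c h //=.
rewrite (_ : c.+1 < k = true); last by lia.
rewrite IH; last by lia.
rewrite IH; last by lia.
rewrite expnS; case: q q0 {IH} => // q _; rewrite subn1 /= mulSn; lia.
Qed.

Lemma F_edge q k n c : 0 < q -> 0 < n -> n + c = k -> F q k n c + 1 = q ^ n.
Proof.
move=> q0; elim: n c => [|n IH] c //= _ h.
case: n IH h => [|n] IH h.
  rewrite (_ : c.+1 < k = false); last by lia.
  by rewrite /= muln1 expn1; lia.
rewrite (_ : c.+1 < k = true); last by lia.
rewrite (@F_small q k n.+1 0) //; last by lia.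
have : n.+1 + c.+1 = k by lia.
move=> /(IH c.+1 isT).
rewrite (expnS q n.+1); case: q q0 {IH} => // q _; rewrite subn1 /= mulSn; lia.
Qed.

Lemma F_sum q k d m : d < k ->
  F q k (m + d.+1) (k - d.+1) = (q - 1) * \sum_(i < d.+1) F q k (m + d - i) 0.
Proof.
elim: d m => [|d IH] m h.
  rewrite addn1 /= (_ : (k - 1).+1 < k = false); last by lia.
  by rewrite big_ord1 subn0 addn0.
rewrite addnS /= (_ : (k - d.+2).+1 < k = true); last by lia.
rewrite (_ : (k - d.+2).+1 = k - d.+1); last by lia.
rewrite IH; last by lia.
rewrite [X in _ = _ * X]big_ord_recl subn0 mulnDr addnC; congr (_ + _).
congr (_ * _); apply: eq_bigr => i _; congr (F _ _ _ _).
by rewrite lift0 addnS subSS.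
Qed.

Lemma F_rec q k n : 0 < q -> 0 < k -> k <= n ->
  F q k n.+1 0 + (q - 1) * F q k (n - k) 0 = q * F q k n 0.
Proof.
move=> q0; case: k => // k _ kn.
have e1 := @F_sum q k.+1 k (n - k) (ltnSn k).
have e2 := @F_sum q k.+1 k (n - k).-1 (ltnSn k).
rewrite subnn in e1 e2.
rewrite (_ : n - k + k.+1 = n.+1) in e1; last by lia.
rewrite (_ : (n - k).-1 + k.+1 = n) in e2; last by lia.
rewrite e1 big_ord_recl; rewrite big_ord_recr /= in e2.
rewrite (_ : n - k + k - 0 = n); last by lia.
rewrite (_ : (n - k).-1 + k - k = n - k.+1) in e2; last by lia.
rewrite (_ : \sum_(i < k) F q k.+1 (n - k + k - bump 0 i) 0 = \sum_(i < k) F q k.+1 ((n - k).-1 + k - i) 0).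
  move: e2; move: (F q k.+1 n 0) (F q k.+1 (n - k.+1) 0) (\sum_(i < k) F q k.+1 ((n - k).-1 + k - i) 0) => a b c e2.
  rewrite e2; case: q q0 {e1 e2} => // q _; rewrite subn1 /=; nia.
by apply: eq_bigr => i _; congr (F _ _ _ _); rewrite /bump /=; lia.
Qed.

From Stdlib Require Import Reals Lra Lia Psatz.
Local Open Scope R_scope.

Lemma exp_le' x y : x <= y -> exp x <= exp y.
Proof. move=> h; case: (Rle_lt_or_eq_dec _ _ h) => [/exp_increasing|->]; lra. Qed.

Lemma exp_pow' a n : exp a ^ n = exp (INR n * a).
Proof.
elim: n => [|n IH]; first by rewrite /= Rmult_0_l exp_0.
by rewrite -tech_pow_Rmult IH -exp_plus S_INR; f_equal; ring.
Qed.

Lemma bernoulli x n : 0 <= x <= 1 -> 1 - INR n * x <= (1 - x) ^ n.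
Proof.
move=> hx; elim: n => [|n IH]; first by rewrite /=; lra.
rewrite -tech_pow_Rmult S_INR.
have h1 : (1 - INR n * x) * (1 - x) <= (1 - x) * (1 - x) ^ n.
  rewrite Rmult_comm; apply: Rmult_le_compat_l; lra.
have h2 : 0 <= INR n * x * x by apply: Rmult_le_pos; [apply: Rmult_le_pos; [apply: pos_INR|]|]; lra.
nra.
Qed.

Lemma pow_le_decr (x : R) (a b : nat) : 0 <= x <= 1 -> (a <= b)%nat -> x ^ b <= x ^ a.
Proof.
move=> hx /subnK <-; rewrite pow_add.
have : x ^ (b - a) <= 1 by rewrite -(pow1 (b - a)); apply: pow_incr; lra.
have : 0 <= x ^ a by apply: pow_le; lra.
nra.
Qed.

Lemma le_div (a b c : R) : 0 < c -> a * c <= b -> a <= b / c.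
Proof.
move=> hc h; apply: (Rmult_le_reg_r c) => //.
rewrite /Rdiv Rmult_assoc Rinv_l; [lra | exact: Rgt_not_eq].
Qed.

Lemma div_le (a b c : R) : 0 < c -> a <= b * c -> a / c <= b.
Proof.
move=> hc h; apply: (Rmult_le_reg_r c) => //.
rewrite /Rdiv Rmult_assoc Rinv_l; [lra | exact: Rgt_not_eq].
Qed.

Section Abs.
Variables (Q : R) (k : nat) (g : nat -> R).
Hypotheses (hQ : 2 <= Q) (hk : (0 < k)%nat)
  (Hpos : forall n, 0 <= g n)
  (H0 : g 0 = 1)
  (Hs : forall n, (n < k)%nat -> g n = Q ^ n)
  (Hk : g k = Q ^ k - 1)
  (Hr : forall n, (k <= n)%nat -> g n.+1 = Q * g n - (Q - 1) * g (n - k)).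

Lemma chain_low (l : R) N : 0 <= l -> (forall i, (i < N)%nat -> l * g i <= g i.+1) ->
  forall j, (j <= N)%nat -> l ^ j * g (N - j) <= g N.
Proof.
move=> l0 H; elim=> [|j IH] hj /=; first by rewrite subn0; lra.
have hi : (N - j.+1 < N)%nat by lia.
have e : ((N - j.+1).+1 = N - j)%nat by lia.
have := H _ hi; rewrite e => h1.
have := IH (ltnW hj) => h2.
have : 0 <= l ^ j by apply: pow_le.
nra.
Qed.

Lemma chain_up N : (forall i, (i < N)%nat -> g i.+1 <= Q * g i) ->
  forall j, (j <= N)%nat -> g N <= Q ^ j * g (N - j).
Proof.
move=> H; elim=> [|j IH] hj /=; first by rewrite subn0; lra.
have hi : (N - j.+1 < N)%nat by lia.
have e : ((N - j.+1).+1 = N - j)%nat by lia.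
have := H _ hi; rewrite e => h1.
have := IH (ltnW hj) => h2.
have : 0 <= Q ^ j by apply: pow_le; lra.
nra.
Qed.


Lemma Qpow_pos m : 0 < Q ^ m.
Proof. apply: pow_lt; lra. Qed.

Lemma Qpow_ge1 m : 1 <= Q ^ m.
Proof. rewrite -(pow1 m); apply: pow_incr; lra. Qed.

Definition lam := Q - / Q ^ (k - 1).

Lemma key_lam : INR k <= Q ^ (k - 1) -> (Q - 1) * Q ^ (k - 1) <= lam ^ k.
Proof.
move: hk; rewrite /lam; case: k => // k' _; rewrite (_ : (k'.+1 - 1)%nat = k'); last by lia.
move=> hK.
set x := / Q ^ k'.+1.
have eQ : Q ^ k'.+1 = Q * Q ^ k' by [].
have hx : Q - / Q ^ k' = Q * (1 - x).
  rewrite /x eQ; field; split; [apply: Rgt_not_eq; apply: Qpow_pos | lra].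
rewrite hx Rpow_mult_distr.
have px : 0 <= x <= 1.
  rewrite /x; split; first by apply/Rlt_le/Rinv_0_lt_compat/Qpow_pos.
  rewrite -Rinv_1; apply: Rinv_le_contravar; [lra | apply: Qpow_ge1].
have b := @bernoulli x k'.+1 px.
have e2 : Q ^ k'.+1 * (INR k'.+1 * x) = INR k'.+1.
  by rewrite /x; field; apply: Rgt_not_eq; apply: Qpow_pos.
have pq := Qpow_pos k'.+1.
have : Q ^ k'.+1 * (1 - INR k'.+1 * x) <= Q ^ k'.+1 * (1 - x) ^ k'.+1.
  by apply: Rmult_le_compat_l; lra.
rewrite eQ in e2 *; nra.
Qed.

Lemma lam_pos : 0 <= lam.
Proof.
rewrite /lam; have : / Q ^ (k - 1) <= 1.
  rewrite -Rinv_1; apply: Rinv_le_contravar; [lra | apply: Qpow_ge1].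
lra.
Qed.

Lemma lam_le : lam <= Q.
Proof.
rewrite /lam; have : 0 < / Q ^ (k - 1) by apply/Rinv_0_lt_compat/Qpow_pos.
lra.
Qed.

Lemma ratio_low : INR k <= Q ^ (k - 1) -> forall n, lam * g n <= g n.+1.
Proof.
move=> hK.
suff H : forall N n, (n < N)%nat -> lam * g n <= g n.+1.
  by move=> n; apply: (H n.+1).
elim=> [|N IH] n //; rewrite ltnS leq_eqVlt => /orP [/eqP ->|]; last exact: IH.
have [h1|h2] := ltnP N.+1 k.
  rewrite !Hs //; last by apply: ltnW.
  rewrite -tech_pow_Rmult.
  have := Qpow_pos N; have := lam_le; nra.
have [e|h3] := eqVneq N.+1 k.
  rewrite e Hk Hs; last by rewrite -e.
  rewrite /lam (_ : N = (k - 1)%nat); last by rewrite -e subn1.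
  have : Q ^ k = Q * Q ^ (k - 1) by rewrite -e subn1 /=.
  move=> ->; apply: Req_le; field; apply: Rgt_not_eq; apply: Qpow_pos.
have kN : (k <= N)%nat by lia.
rewrite Hr //.
have := @chain_low lam N lam_pos IH k kN.
have := key_lam hK.
have := Hpos (N - k).
have pk := Qpow_pos (k - 1).
rewrite /lam => a b c.
have : (Q - 1) * g (N - k) <= g N / Q ^ (k - 1).
  apply: le_div => //; nra.
rewrite /Rdiv; lra.
Qed.

Lemma g_low : INR k <= Q ^ (k - 1) -> forall n, lam ^ n <= g n.
Proof.
move=> hK n.
have := @chain_low lam n lam_pos (fun i _ => ratio_low hK i) n (leqnn n).
by rewrite subnn H0 Rmult_1_r.
Qed.

Lemma ratio_up1 n : g n.+1 <= Q * g n.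
Proof.
have [h1|h2] := ltnP n.+1 k.
  rewrite !Hs //; last by apply: ltnW.
  rewrite -tech_pow_Rmult; lra.
have [e|h3] := eqVneq n.+1 k.
  rewrite e Hk Hs; last by rewrite -e.
  rewrite -e -tech_pow_Rmult; lra.
rewrite Hr; last by lia.
have := Hpos (n - k); nra.
Qed.

Definition mu := Q - (Q - 1) / Q ^ k.

Lemma ratio_up2 n : (k <= n)%nat -> g n.+1 <= mu * g n.
Proof.
move=> kn; rewrite Hr //.
have hc := @chain_up n (fun i _ => ratio_up1 i) k kn.
have pk := Qpow_pos k.
have h : g n / Q ^ k <= g (n - k).
  apply: div_le => //; nra.
move: h; rewrite /mu /Rdiv => h.
nra.
Qed.

Lemma mu_pos : 0 <= mu.
Proof.
rewrite /mu; have := Qpow_ge1 k => h.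
have : (Q - 1) / Q ^ k <= Q - 1.
  apply: div_le; first by apply: Qpow_pos.
  nra.
lra.
Qed.

Lemma g_up d : g (k + d) <= mu ^ d * Q ^ k.
Proof.
elim: d => [|d IH].
  rewrite addn0 Hk /=; lra.
rewrite addnS.
have := @ratio_up2 (k + d) (leq_addr d k).
rewrite -tech_pow_Rmult; have := mu_pos; nra.
Qed.

End Abs.

Lemma expn_pow (a b : nat) : expn a b = Nat.pow a b.
Proof. by elim: b => // b IH; rewrite expnS IH. Qed.

Lemma pow_muln (x : R) (a b : nat) : x ^ (a * b)%nat = (x ^ a) ^ b.
Proof.
elim: b => [|b IH]; first by rewrite muln0.
by rewrite mulnS pow_add IH -tech_pow_Rmult.
Qed.

Lemma INR_pow (a b : nat) : INR (expn a b) = INR a ^ b.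
Proof. by rewrite expn_pow pow_INR. Qed.

Delimit Scope nat_scope with N.

Theorem lemma1 (q n k : nat) (hq : (2 <= q)%N) (hk : (5 <= k)%N) (hkn : (k <= n)%N) :
  (INR q ^ n
     * Rpower ((INR q - 1) / INR q) (rll_c2 q n k * (INR n / INR q ^ (k - 1)))
     * exp (- (rll_c2 q n k / rll_c1 q k) * (INR n / Rpower (INR q) (3 / 2 * INR k - 1)))
   <= INR (a_q q n k)
   <= Rpower (INR q) (INR n - rll_c3 q * ((INR n - 2 * INR k) / INR q ^ k)))%R.
Proof.
have q0 : (0 < q)%nat by lia.
have k0 : (0 < k)%nat by lia.
set Q := INR q.
set g := fun m => INR (F q k m 0).
have hQ : 2 <= Q.
  have := le_INR 2 q (elimT leP hq); rewrite /Q /=; lra.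
have Hpos : forall m, 0 <= g m by move=> m; apply: pos_INR.
have H0 : g 0%nat = 1 by [].
have Hs : forall m, (m < k)%nat -> g m = Q ^ m.
  by move=> m hm; rewrite /g F_small ?addn0 // INR_pow.
have Hk : g k = Q ^ k - 1.
  have := @F_edge q k k 0 q0 k0 (addn0 k).
  move/(f_equal INR); rewrite plus_INR INR_pow /= -/(g k) -/Q; lra.
have INRq1 : INR (q - 1) = Q - 1.
  by rewrite (minus_INR q 1) //; apply/leP.
have Hr : forall m, (k <= m)%nat -> g m.+1 = Q * g m - (Q - 1) * g (m - k)%nat.
  move=> m km; have := @F_rec q k m q0 k0 km.
  move/(f_equal INR); rewrite plus_INR !mult_INR INRq1 -/Q.
  rewrite /g; lra.
have hK : INR k <= Q ^ (k - 1).
  rewrite /Q -INR_pow; apply: le_INR; apply/leP.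
  have := @ltn_expl q (k - 1) hq; lia.
have ea : INR (a_q q n k) = g n by rewrite /g a_q_count // count_words.
rewrite ea; split.
-
  have gl := @g_low Q k g hQ k0 Hpos H0 Hs Hk Hr hK n.
  apply: (Rle_trans _ _ _ _ gl).
  set N := expn q (k - 1).
  set m := (n %/ N)%nat.
  have eN : INR N = Q ^ (k - 1) by rewrite /N INR_pow.
  have pN := @Qpow_pos Q hQ (k - 1).
  have pk := @Qpow_pos Q hQ k.
  have eQk : Q ^ k = Q * Q ^ (k - 1).
    have ek : k = (k - 1).+1 by lia.
    by rewrite {1}ek.
  have nR : 0 < INR n by apply: lt_0_INR; apply/leP; lia.
  have ec2 : rll_c2 q n k * (INR n / Q ^ (k - 1)) = INR m + 1.
    rewrite /rll_c2 -expn_pow -/N -/m -/Q; field; split; lra.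
  rewrite -/Q ec2.
  set r := (Q - 1) / Q.
  have r0 : 0 < r by rewrite /r; apply: Rdiv_lt_0_compat; lra.
  rewrite -S_INR Rpower_pow //.
  set E := exp _.
  have c1p : 0 < rll_c1 q k.
    rewrite /rll_c1 /Rpower; apply: Rdiv_lt_0_compat; last by rewrite -/Q; lra.
    apply: Rmult_lt_0_compat; [rewrite -/Q; lra | exact: exp_pos].
  have c2p : 0 <= rll_c2 q n k.
    rewrite /rll_c2; apply: Rlt_le; apply: Rdiv_lt_0_compat.
      have := pos_INR (n %/ Nat.pow q (k - 1)); lra.
    by apply: Rdiv_lt_0_compat; rewrite -/Q.
  have tp : 0 <= INR n / Rpower Q (3 / 2 * INR k - 1).
    by apply: Rlt_le; apply: Rdiv_lt_0_compat => //; rewrite /Rpower; apply: exp_pos.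
  have E1 : E <= 1.
    rewrite /E -[X in _ <= X]exp_0; apply: exp_le'.
    have : 0 <= rll_c2 q n k / rll_c1 q k * (INR n / Rpower Q (3 / 2 * INR k - 1)).
      apply: Rmult_le_pos => //; rewrite /Rdiv; apply: Rmult_le_pos => //; apply/Rlt_le/Rinv_0_lt_compat; exact: c1p.
    move=> ?; lra.
  set x := / Q ^ k.
  have px : 0 <= x <= 1.
    rewrite /x; split; first by apply/Rlt_le/Rinv_0_lt_compat.
    rewrite -Rinv_1; apply: Rinv_le_contravar; [lra | apply: Qpow_ge1; lra].
  have elam : lam Q k = Q * (1 - x).
    rewrite /lam /x eQk; field; lra.

  rewrite elam Rpow_mult_distr.
  have hnN : (n <= m.+1 * N)%nat by apply: ltnW; apply: ltn_ceil; rewrite /N expn_gt0; lia.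
  have b1 : (1 - x) ^ (m.+1 * N)%nat <= (1 - x) ^ n by apply: pow_le_decr => //; lra.
  rewrite mulnC pow_muln in b1.
  have b2 : r <= (1 - x) ^ N.
    apply: (Rle_trans _ _ _ _ (@bernoulli x N px)).
    rewrite eN /x /r eQk; apply: Req_le; field; lra.
  have b3 : r ^ m.+1 <= ((1 - x) ^ N) ^ m.+1 by apply: pow_incr; lra.
  have pQn : 0 <= Q ^ n by apply: pow_le; lra.
  have pr : 0 <= r ^ m.+1 by apply: pow_le; lra.
  have : Q ^ n * r ^ m.+1 <= Q ^ n * (1 - x) ^ n by apply: Rmult_le_compat_l; lra.
  have : Q ^ n * r ^ m.+1 * E <= Q ^ n * r ^ m.+1.
    have e0 : 0 <= E by rewrite /E; apply/Rlt_le/exp_pos.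
    have : 0 <= Q ^ n * r ^ m.+1 by apply: Rmult_le_pos.
    nra.
  lra.
- have gu : g (k + (n - k))%nat <= mu Q k ^ (n - k) * Q ^ k.
    by apply: g_up.
  rewrite subnKC // in gu.
  apply: (Rle_trans _ _ _ gu).
  have pk := @Qpow_pos Q hQ k.
  set y := (Q - 1) / (Q * Q ^ k).
  have emu : mu Q k = Q * (1 - y) by rewrite /mu /y; field; split; lra.
  have eQn : Q ^ n = Q ^ (n - k) * Q ^ k by rewrite -pow_add; congr pow; lia.
  rewrite emu Rpow_mult_distr.
  have py : 0 <= y <= 1.
    rewrite /y; split; first by apply: Rlt_le; apply: Rdiv_lt_0_compat; nra.
    have h1 := @Qpow_ge1 Q hQ k; apply: div_le; [apply: Rmult_lt_0_compat; lra | nra].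
  have b1 : (1 - y) ^ (n - k) <= exp (INR (n - k) * - y).
    rewrite -exp_pow'; apply: pow_incr; have := exp_ineq1_le (- y); lra.
  have lnQ : 0 < ln Q by rewrite -ln_1; apply: ln_increasing; lra.
  rewrite /Rpower.
  have eR : (INR n - rll_c3 q * ((INR n - 2 * INR k) / Q ^ k)) * ln Q =
            INR n * ln Q + - ((Q - 1) ^ 2 * (INR n - 2 * INR k) / (2 * Q ^ 2 * Q ^ k)).
    rewrite /rll_c3 -/Q; field; split; [lra | split; lra].
  rewrite eR exp_plus -/(Rpower Q (INR n)) Rpower_pow; last by lra.
  rewrite minus_INR in b1; last by apply/leP.
  have nk : INR k <= INR n by apply: le_INR; apply/leP.
  have b2 : exp ((INR n - INR k) * - y) <=
            exp (- ((Q - 1) ^ 2 * (INR n - 2 * INR k) / (2 * Q ^ 2 * Q ^ k))).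
    apply: exp_le'.
    have eD : (INR n - INR k) * - y + ((Q - 1) ^ 2 * (INR n - 2 * INR k) / (2 * Q ^ 2 * Q ^ k)) =
      - ((Q - 1) / (2 * Q ^ 2 * Q ^ k) * ((Q + 1) * (INR n - INR k) + (Q - 1) * INR k)).
      rewrite /y; field; lra.
    have : 0 <= (Q - 1) / (2 * Q ^ 2 * Q ^ k) * ((Q + 1) * (INR n - INR k) + (Q - 1) * INR k).
      apply: Rmult_le_pos.
        apply: Rlt_le; apply: Rdiv_lt_0_compat; first lra.
        apply: Rmult_lt_0_compat => //; apply: Rmult_lt_0_compat; [lra | apply: pow_lt; lra].
      have := pos_INR k; nra.
    move=> ?; lra.
  have pQ : 0 <= Q ^ (n - k) * Q ^ k by apply: Rmult_le_pos; apply: pow_le; lra.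
  rewrite eQn.
  have : (1 - y) ^ (n - k) <= exp (- ((Q - 1) ^ 2 * (INR n - 2 * INR k) / (2 * Q ^ 2 * Q ^ k))) by lra.
  nra.
Qed.
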